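(* Let $a,b,c,d\in\mathbb{C}\setminus\{0\}$ and let $s$ be the polynomial vector field on $\mathbb{A}^2$ associated to the Lotka–Volterra system \[ X'=X(aY+b),\qquad Y'=Y(cX+d). \] If $b\neq d$, the only irreducible invariant curves of $s$ defined over $\mathbb{C}$ are $X=0$ and $Y=0$. If $b=d$, the only irreducible invariant curves of $s$ defined over $\mathbb{C}$ are $X=0$, $Y=0$ and $cX-aY=0$.
   Context: For $P\in\mathbb{C}[X,Y]$, the Lie derivative along $s$ is $\mathcal{L}_s(P)=X(aY+b)\,\partial P/\partial X+Y(cX+d)\,\partial P/\partial Y$. A nonzero polynomial $P$ is invariant if $P$ divides $\mathcal{L}_s(P)$; an (irreducible) invariant curve over $\mathbb{C}$ is the zero set of an (irreducible) invariant polynomial $P\in\mathbb{C}[X,Y]$. *)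

(* Defs.v *)
From HB Require Import structures.
From mathcomp Require Import all_boot all_order all_algebra.
From mathcomp Require Import complex.
From mathcomp Require Import reals.
Set Implicit Arguments. Unset Strict Implicit. Unset Printing Implicit Defensive.
Import Order.TTheory GRing.Theory Num.Theory.
Local Open Scope ring_scope.

(* Bivariate polynomials C[X,Y] are represented as {poly {poly C}}: the
   inner polynomial variable is X, the outer one is Y. *)
Section LV.
Variable R : realType.
Local Notation C := (R[i]).
Local Notation Poly2 := ({poly {poly C}}).

Definition varX : Poly2 := ('X : {poly C})%:P.
Definition varY : Poly2 := 'X.
Definition cst2 (k : C) : Poly2 := k%:P%:P.

Definition dX (P : Poly2) : Poly2 := map_poly (fun q : {poly C} => q^`()) P.
Definition dY (P : Poly2) : Poly2 := P^`().

Definition eval2 (P : Poly2) (x y : C) : C := (P.[y%:P]).[x].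

Definition lie (a b c d : C) (P : Poly2) : Poly2 :=
  varX * (cst2 a * varY + cst2 b) * dX P + varY * (cst2 c * varX + cst2 d) * dY P.

Definition invariant (a b c d : C) (P : Poly2) : Prop :=
  P != 0 /\ exists Q : Poly2, lie a b c d P = Q * P.

Definition irreducible2 (P : Poly2) : Prop :=
  P != 0 /\ ~ (P \is a GRing.unit) /\
  forall Q S : Poly2, P = Q * S -> Q \is a GRing.unit \/ S \is a GRing.unit.

Definition irr_inv_curve (a b c d : C) (S : C * C -> Prop) : Prop :=
  exists P : Poly2, irreducible2 P /\ invariant a b c d P /\
    forall p : C * C, S p <-> eval2 P p.1 p.2 = 0.
End LV.

(* Main.v *)
Require Import Defs.
From HB Require Import structures.
From mathcomp Require Import all_boot all_order all_algebra.
From mathcomp Require Import complex reals.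
From mathcomp Require Import ring zify.
Import Order.TTheory GRing.Theory Num.Theory.
Local Open Scope ring_scope.

HB.lock Definition cf (R : realType) (P : {poly {poly R[i]}}) (i j : nat) : R[i] := (P`_j)`_i.
Arguments cf {R}.

Section LVproof.
Context {R : realType}.
Local Notation C := (R[i]).
Local Notation Poly2 := ({poly {poly C}}).
Implicit Types P Q : Poly2.


Lemma cfE P i j : cf P i j = (P`_j)`_i.
Proof. by rewrite unlock. Qed.
Lemma cfD P Q i j : cf (P + Q) i j = cf P i j + cf Q i j.
Proof. by rewrite !cfE !coefD. Qed.
Lemma cfB P Q i j : cf (P - Q) i j = cf P i j - cf Q i j.
Proof. by rewrite !cfE !coefB. Qed.
Lemma cfN P i j : cf (- P) i j = - cf P i j.
Proof. by rewrite !cfE !coefN. Qed.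
Lemma cfX P i j : cf (varX R * P) i j = if i is i'.+1 then cf P i' j else 0.
Proof. by case: i => [|i]; rewrite !cfE /varX coefCM coefXM. Qed.
Lemma cfY P i j : cf (varY R * P) i j = if j is j'.+1 then cf P i j' else 0.
Proof. by case: j => [|j]; rewrite !cfE /varY coefXM ?coef0. Qed.
Lemma cfC k P i j : cf (cst2 k * P) i j = k * cf P i j.
Proof. by rewrite !cfE /cst2 coefCM coefCM. Qed.
Lemma cfdX P i j : cf (dX P) i j = cf P i.+1 j *+ i.+1.
Proof. by rewrite !cfE /dX coef_map_id0 ?deriv0 // coef_deriv. Qed.
Lemma cfdY P i j : cf (dY P) i j = cf P i j.+1 *+ j.+1.
Proof. by rewrite !cfE /dY coef_deriv coefMn. Qed.

Lemma lie_expand a b c d P : lie a b c d P = cst2 a * (varY R * (varX R * dX P)) + cst2 b * (varX R * dX P)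
   + cst2 c * (varX R * (varY R * dY P)) + cst2 d * (varY R * dY P).
Proof. rewrite /lie. ring. Qed.

Lemma cf_lie a b c d P i j : cf (lie a b c d P) i j =
  (b * i%:R + d * j%:R) * cf P i j
  + a * i%:R * (if j is j'.+1 then cf P i j' else 0)
  + c * j%:R * (if i is i'.+1 then cf P i' j else 0).
Proof.
rewrite lie_expand !cfD (cfC a) (cfC b) (cfC c) (cfC d).
rewrite cfY (cfX (dX P)) (cfX (varY R * dY P)) (cfY (dY P)).
case: i => [|i]; case: j => [|j]; cbv iota.
- ring.
- rewrite (cfX (dX P)) cfdY ?mulr_natr. cbv iota. ring.
- rewrite (cfY (dY P)) cfdX ?mulr_natr. cbv iota. ring.
- rewrite (cfX (dX P)) (cfY (dY P)) !cfdX !cfdY ?mulr_natr. ring.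
Qed.

Lemma cf_big P i j : (size P <= j)%N -> cf P i j = 0.
Proof. by move=> h; rewrite cfE (nth_default _ h) coef0. Qed.

Lemma natr_neq0 n : (n != 0)%N -> (n%:R : C) != 0.
Proof. by rewrite pnatr_eq0. Qed.

Lemma desc (f : nat -> C) N : (forall j, (N <= j)%N -> f j = 0) ->
  (forall j, f j.+1 = 0 -> f j = 0) -> forall j, f j = 0.
Proof.
move=> hN hs j; suff: forall k j, (N <= j + k)%N -> f j = 0 by apply; apply: leq_addl.
elim=> [|k IH] j' h; first by apply: hN; rewrite addn0 in h.
by apply: hs; apply: IH; rewrite addSnnS.
Qed.

Lemma size_const (A B E : {poly C}) : B != 0 -> E = A * B -> (size E <= size B)%N ->
  A = (A`_0)%:P.
Proof.
move=> hB hE hs; apply: size1_polyC.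
have [->|hA] := eqVneq A 0; first by rewrite size_poly0.
move: hs; rewrite hE size_mul //.
have := size_poly_gt0 B; rewrite hB; case: (size B) => // n _.
rewrite addnS /= => h; by rewrite -(leq_add2r n) add1n.
Qed.


Arguments size_const {A B E}.

Lemma lincomb (L R' E1 E2 x y : C) : E1 = 0 -> E2 = 0 -> L - R' = x * E1 + y * E2 -> L = R'.
Proof. by move=> h1 h2 h; apply/eqP; rewrite -subr_eq0 h h1 h2 !mulr0 addr0. Qed.

Lemma core (a b c d : C) (P K : Poly2) : a != 0 -> b != 0 -> c != 0 -> d != 0 -> P != 0 ->
  lie a b c d P = K * P -> P`_0 != 0 -> (exists j, cf P 0 j != 0) ->
  ((size P).-1 = 0%N -> P = cst2 (cf P 0 0)) /\
  ((size P).-1 <> 0%N -> b = d /\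
     P * cst2 (a * ((size P).-1)%:R) = (cst2 c * (varX R * 1) - cst2 a * (varY R * 1)) * - dY P).
Proof.
move=> ha hb hc hd hP hinv hY hX.
set m := (size P).-1.
have hsz : size P = m.+1 by rewrite /m prednK // size_poly_gt0.
clearbody m.
have pz : forall i j, (m < j)%N -> cf P i j = 0.
  by move=> i j h; apply: cf_big; rewrite hsz.
have pzi : forall i j, (size (P`_j)%R <= i)%N -> cf P i j = 0.
  by move=> i j h; rewrite cfE nth_default.
have sK : (size K <= 2)%N.
  have [->|hK] := eqVneq K 0; first by rewrite size_poly0.
  have hl : (size (lie a b c d P) <= m.+2)%N.
    apply/leq_sizeP => j hj; apply/polyP => i; rewrite coef0 -cfE cf_lie.
    case: j hj => [|j] hj //; case: i => [|i]; cbv iota; rewrite !pz //; try lia; ring.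
  move: hl; rewrite hinv size_mul // hsz addnS /= => h.
  rewrite -(leq_add2r m); apply: (leq_trans h); by rewrite add2n.
set K0 := K`_0; set K1 := K`_1.
have hKd : K = K0%:P + 'X * K1%:P.
  apply/polyP => i; rewrite coefD coefC coefXM coefC.
  case: i => [|[|i]]; rewrite /K0 /K1 ?eqxx ?addr0 ?add0r //.
  by move/leq_sizeP: sK => ->.
have cKP : forall j, (K * P)`_j = K0 * P`_j + (if j is j'.+1 then K1 * P`_j' else 0).
  move=> j; rewrite hKd mulrDl -mulrA coefD coefCM coefXM coefCM.
  by case: j.
have hK0 : K0 = (K0`_0)%:P.
  have e0 : (lie a b c d P)`_0 = K0 * P`_0 by rewrite hinv cKP addr0.
  apply: (size_const hY e0).
  apply/leq_sizeP => i hi; rewrite -cfE cf_lie pzi //; cbv iota.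
  ring.
have hlm : P`_m != 0.
  by rewrite -lead_coef_eq0 lead_coefE hsz /= in hP.
have hK1 : K1 = (K1`_0)%:P.
  have e1 : (lie a b c d P)`_m.+1 = K1 * P`_m.
    by rewrite hinv cKP nth_default ?hsz // mulr0 add0r.
  apply: (size_const hlm e1).
  apply/leq_sizeP => i hi; rewrite -cfE cf_lie (pzi i m) // pz //.
  case: i hi => [|i] hi; cbv iota; rewrite ?pz //; ring.
set g := K0`_0; set bt := K1`_0.
have Hrec : forall i j, cf (lie a b c d P) i j =
    g * cf P i j + (if j is j'.+1 then bt * cf P i j' else 0).
  move=> i j; rewrite cfE hinv cKP hK0 hK1 coefD coefCM.
  by case: j => [|j]; rewrite ?coef0 ?addr0 ?coefCM /g /bt !cfE.
have hb0 : bt = 0.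
  apply/eqP; apply/negPn/negP => hbt; case: hX => j0; apply/negP; rewrite negbK.
  apply/eqP; move: j0; apply: (desc _ m.+1) => [j hj|j h]; first by apply: pz.
  have := Hrec 0 j.+1; rewrite cf_lie h; cbv iota.
  have -> : (b * 0%:R + d * j.+1%:R) * 0 + a * 0%:R * cf P 0 j + c * j.+1%:R * 0 = 0 by ring.
  rewrite mulr0 add0r => /esym /eqP; rewrite mulf_eq0 (negbTE hbt) /=; exact/eqP.
have EQ0 : forall i j, (b * i%:R + d * j%:R - g) * cf P i j
    + a * i%:R * (if j is j'.+1 then cf P i j' else 0)
    + c * j%:R * (if i is i'.+1 then cf P i' j else 0) = 0.
  move=> i j; have := Hrec i j; rewrite cf_lie => H.
  set X1 := (if j is j'.+1 then cf P i j' else 0) in H *.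
  set X2 := (if i is i'.+1 then cf P i' j else 0) in H *.
  have -> : (b * i%:R + d * j%:R - g) * cf P i j + a * i%:R * X1 + c * j%:R * X2 =
    ((b * i%:R + d * j%:R) * cf P i j + a * i%:R * X1 + c * j%:R * X2) - g * cf P i j by ring.
  rewrite H hb0; case: (j) => [|j']; cbv iota; ring.
have hrow : forall i, cf P i.+1 m = 0.
  move=> i; have := EQ0 i.+1 m.+1; cbv iota.
  rewrite (pz i.+1 m.+1) // (pz i m.+1) // => H.
  have : a * i.+1%:R * cf P i.+1 m = 0 by rewrite -H; ring.
  by move/eqP; rewrite !mulf_eq0 (negbTE ha) pnatr_eq0 /= => /eqP.
have hp0m : cf P 0 m != 0.
  apply/negP => /eqP h0; move/eqP: hlm; apply; apply/polyP => i.
  by rewrite coef0 -cfE; case: i => [|i]; [exact: h0 | exact: hrow].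
have hg : g = d * m%:R.
  have := EQ0 0 m; cbv iota => H.
  have : (d * m%:R - g) * cf P 0 m = 0 by rewrite -H; ring.
  by move/eqP; rewrite mulf_eq0 (negbTE hp0m) orbF subr_eq0 => /eqP ->.
have hT : forall i j, (m < i + j)%N -> cf P i j = 0.
  suff H : forall k j, (m.+1 <= j + k)%N -> forall i, (m < i + j)%N -> cf P i j = 0.
    by move=> i j hij; apply: (H m.+1 j) => //; lia.
  elim=> [|k IH] j hjk i hij; first by apply: pz; lia.
  have [h|h] := boolP (m.+1 <= j + k)%N; first exact: IH.
  case: i hij => [|i] hij; first lia.
  have := EQ0 i.+1 j.+1; cbv iota.
  rewrite (IH j.+1 _ i.+1) ?(IH j.+1 _ i); try lia.
  move=> H; have : a * i.+1%:R * cf P i.+1 j = 0 by rewrite -H; ring.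
  by move/eqP; rewrite !mulf_eq0 (negbTE ha) pnatr_eq0 /= => /eqP.
have hdiag : forall k, (k <= m)%N -> cf P k (m - k) != 0.
  elim=> [|k IH] hk; first by rewrite subn0.
  have e : (m - k = (m - k.+1).+1)%N by lia.
  have := EQ0 k.+1 (m - k.+1).+1; cbv iota.
  rewrite (hT k.+1 (m - k.+1).+1); last lia.
  move=> H; apply/negP => /eqP h0.
  have := IH (ltnW hk); rewrite e => /negP; apply; apply/eqP.
  have : c * (m - k.+1).+1%:R * cf P k (m - k.+1).+1 = 0 by rewrite -H h0; ring.
  by move/eqP; rewrite !mulf_eq0 (negbTE hc) pnatr_eq0 /= => /eqP.
have hm0 : cf P m 0 != 0 by have := hdiag m (leqnn m); rewrite subnn.
have hbm : b * m%:R = g.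
  have := EQ0 m 0; cbv iota => H.
  have : (b * m%:R - g) * cf P m 0 = 0 by rewrite -H; ring.
  by move/eqP; rewrite mulf_eq0 (negbTE hm0) orbF subr_eq0 => /eqP.
split.
  move=> hm; have hle : (size P <= 1)%N by rewrite hsz hm.
  rewrite {1}(size1_polyC hle) /cst2; congr (_%:P).
  apply/polyP => i; rewrite coefC -cfE; case: i => [|i] //=.
  by have := hrow i; rewrite hm.
move=> hm.
have hbd : b = d.
  apply/eqP; rewrite -subr_eq0; have : (b - d) * m%:R = 0 by rewrite mulrBl hbm hg subrr.
  by move/eqP; rewrite mulf_eq0 pnatr_eq0 (negbTE (introN eqP hm)) orbF.
split; first done.
have hlow : forall s, (s < m)%N -> forall i j, (i + j)%N = s -> cf P i j = 0.
  elim=> [|s IH] hs i j hij.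
    have := EQ0 i j; case: i hij => [|i] hij; last by move: hij; clear; lia.
    case: j hij => [|j] hij; last by move: hij; clear; lia.
    cbv iota; have -> : (b * 0%:R + d * 0%:R - g) = - (d * m%:R) by rewrite hg; ring.
    move=> H; have : - (d * m%:R) * cf P 0 0 = 0 by rewrite -H; ring.
    by move/eqP; rewrite mulNr oppr_eq0 !mulf_eq0 (negbTE hd) pnatr_eq0 (negbTE (introN eqP hm)) => /eqP.
  have n1 : (if j is j'.+1 then cf P i j' else 0) = 0.
    case: j hij => [|j] hij //; apply: IH => //; move: hs hij; clear; lia.
  have n2 : (if i is i'.+1 then cf P i' j else 0) = 0.
    case: i hij {n1} => [|i] hij //; apply: IH => //; move: hs hij; clear; lia.
  have := EQ0 i j; rewrite n1 n2 !mulr0 !addr0 => /eqP; rewrite mulf_eq0 => /orP [|/eqP //].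
  have -> : b * i%:R + d * j%:R - g = d * ((i + j)%:R - m%:R) by rewrite hbd hg natrD; ring.
  rewrite mulf_eq0 (negbTE hd) subr_eq0 eqr_nat /= => /eqP hij'.
  by move: hij' hij hs; clear; lia.
have hom : forall i j, (m%:R - (i + j)%:R) * cf P i j = 0.
  move=> i j; have [h|h] := eqVneq (cf P i j) 0; first by rewrite h mulr0.
  suff -> : (i + j = m)%N by rewrite subrr mul0r.
  have [hlt|hge] := ltnP (i + j) m; first by rewrite (hlow _ hlt i j) ?eqxx in h.
  have [hgt|hle] := ltnP m (i + j); first by rewrite (hT i j hgt) ?eqxx in h.
  by apply/eqP; rewrite eqn_leq hle hge.
have hc0 : forall i j, (b * i%:R + d * j%:R - g) * cf P i j = 0.
  move=> i j; have -> : b * i%:R + d * j%:R - g = - d * (m%:R - (i + j)%:R).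
    by rewrite hbd hg natrD; ring.
  by rewrite -mulrA hom mulr0.
have REL : forall i j, a * i%:R * (if j is j'.+1 then cf P i j' else 0)
    + c * j%:R * (if i is i'.+1 then cf P i' j else 0) = 0.
  by move=> i j; have := EQ0 i j; rewrite hc0 add0r.
apply/polyP => j; apply/polyP => i; rewrite -!cfE.
rewrite mulrC cfC.
have -> : (cst2 c * (varX R * 1) - cst2 a * (varY R * 1)) * - dY P =
   cst2 c * (varX R * (- dY P)) - cst2 a * (varY R * (- dY P)) by ring.
rewrite cfB !cfC cfX cfY.
apply: (lincomb _ _ _ _ a 1 (hom i j) (REL i j.+1)).
case: i => [|i]; case: j => [|j]; cbv iota; rewrite ?cfN ?cfdY; ring.
Qed.

End LVproof.



Section Main.
Context {R : realType}.
Local Notation C := (R[i]).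
Local Notation Poly2 := ({poly {poly C}}).
Implicit Types P Q A B U : Poly2.

Lemma unit2 U : U \is a GRing.unit -> exists2 k : C, k != 0 & U = cst2 k.
Proof.
rewrite poly_unitE => /andP [/eqP hs]; rewrite poly_unitE => /andP [/eqP hs0 hu].
exists ((U`_0)`_0); first by rewrite -unitfE.
apply: etrans (size1_polyC (eq_leq hs)) _; rewrite /cst2; congr (_%:P).
exact: size1_polyC (eq_leq hs0).
Qed.

Lemma cst2_unit (k : C) : k != 0 -> cst2 k \is a GRing.unit.
Proof.
move=> hk; rewrite /cst2 poly_unitE size_polyC polyC_eq0 hk coefC eqxx.
by rewrite poly_unitE size_polyC hk coefC eqxx unitfE.
Qed.

Lemma eval2M A B x y : eval2 (A * B) x y = eval2 A x y * eval2 B x y.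
Proof. by rewrite /eval2 !hornerM. Qed.
Lemma eval2B A B x y : eval2 (A - B) x y = eval2 A x y - eval2 B x y.
Proof. by rewrite /eval2 !hornerD !hornerN. Qed.
Lemma eval2N A x y : eval2 (- A) x y = - eval2 A x y.
Proof. by rewrite /eval2 !hornerN. Qed.
Lemma eval2C (k : C) x y : eval2 (cst2 k) x y = k.
Proof. by rewrite /eval2 /cst2 !hornerC. Qed.
Lemma eval2X x y : eval2 (varX R) x y = x.
Proof. by rewrite /eval2 /varX hornerC hornerX. Qed.
Lemma eval2Y x y : eval2 (varY R) x y = y.
Proof. by rewrite /eval2 /varY hornerX hornerC. Qed.
Lemma eval2_1 x y : eval2 (1 : Poly2) x y = 1.
Proof. by rewrite /eval2 !hornerE. Qed.

Lemma unit_size1 (q : {poly C}) : size q = 1%N -> q \is a GRing.unit.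
Proof.
move=> hs; rewrite poly_unitE hs eqxx unitfE /=.
have : lead_coef q != 0 by rewrite lead_coef_eq0 -size_poly_eq0 hs.
by rewrite lead_coefE hs.
Qed.

Lemma aux1 A B : size A = 1%N -> (A * B)`_1 \is a GRing.unit -> A \is a GRing.unit.
Proof.
move=> hs; rewrite {1}(size1_polyC (eq_leq hs)) coefCM unitrM => /andP [hu _].
by rewrite poly_unitE hs eqxx.
Qed.

Lemma irr_lin P : size P = 2%N -> P`_1 \is a GRing.unit ->
  forall A B, P = A * B -> A \is a GRing.unit \/ B \is a GRing.unit.
Proof.
move=> hs hu A B hP.
have hA : A != 0 by apply/eqP => hA; move: hs; rewrite hP hA mul0r size_poly0.
have hB : B != 0 by apply/eqP => hB; move: hs; rewrite hP hB mulr0 size_poly0.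
have := hs; rewrite hP size_mul //.
have := size_poly_gt0 A; have := size_poly_gt0 B; rewrite hA hB.
case hsa : (size A) => [|[|sa]] //.
  by move=> _ _ _; left; apply: (aux1 A B hsa); rewrite -hP.
case hsb : (size B) => [|[|sb]] //.
  by move=> _ _ _; right; apply: (aux1 B A hsb); rewrite mulrC -hP.
move=> _ _; rewrite !addSn /= => h; exfalso; move: h; clear; lia.
Qed.


Lemma cf1 i j : cf (1 : Poly2) i j = if i is 0 then (if j is 0 then 1 else 0) else 0.
Proof.
rewrite cfE -[1 : Poly2]/((1 : {poly C})%:P) coefC.
case: j => [|j] /=; last by rewrite coef0; case: i.
by rewrite coef1; case: i.
Qed.

Lemma irr_varX A B : varX R = A * B -> A \is a GRing.unit \/ B \is a GRing.unit.
Proof.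
move=> hP.
have hs : size (varX R) = 1%N by rewrite /varX size_polyC polyX_eq0.
have hA : A != 0 by apply/eqP => hA; move: hs; rewrite hP hA mul0r size_poly0.
have hB : B != 0 by apply/eqP => hB; move: hs; rewrite hP hB mulr0 size_poly0.
have hX : 'X = A`_0 * B`_0 by rewrite -coef0M -hP /varX coefC eqxx.
have := hs; rewrite hP size_mul //.
have := size_poly_gt0 A; have := size_poly_gt0 B; rewrite hA hB.
case hsa : (size A) => [|[|sa]] //; case hsb : (size B) => [|[|sb]] // _ _ hh;
  try by (exfalso; move: hh; rewrite addSn /=; clear; lia).
have hA0 : A`_0 != 0 by apply/eqP => h; move: hX; rewrite h mul0r => /eqP; rewrite polyX_eq0.
have hB0 : B`_0 != 0 by apply/eqP => h; move: hX; rewrite h mulr0 => /eqP; rewrite polyX_eq0.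
have := size_polyX C; rewrite hX size_mul //.
have := size_poly_gt0 (A`_0); have := size_poly_gt0 (B`_0); rewrite hA0 hB0.
case hsa0 : (size A`_0) => [|[|sa0]] //.
  by move=> _ _ _; left; rewrite poly_unitE hsa eqxx unit_size1.
case hsb0 : (size B`_0) => [|[|sb0]] //.
  by move=> _ _ _; right; rewrite poly_unitE hsb eqxx unit_size1.
move=> _ _; rewrite !addSn /= => h; exfalso; move: h; clear; lia.
Qed.

Lemma facY P : P`_0 = 0 -> P = varY R * drop_poly 1 P.
Proof.
move=> h0; have ht : take_poly 1 P = 0.
  by apply/polyP => i; rewrite coef_take_poly coef0; case: i.
by rewrite /varY -{1}(poly_take_drop 1 P) ht add0r expr1 mulrC.
Qed.

Lemma facX P : (forall j, cf P 0 j = 0) -> P = varX R * map_poly (drop_poly 1) P.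
Proof.
move=> h0; apply/polyP => j; rewrite /varX coefCM coef_map_id0 ?drop_poly0r //.
have ht : take_poly 1 P`_j = 0.
  by apply/polyP => i; rewrite coef_take_poly coef0; case: i => //; rewrite -cfE h0.
by rewrite -{1}(poly_take_drop 1 P`_j) ht add0r expr1 mulrC.
Qed.

Definition Q0 (a c : C) : Poly2 := cst2 c * (varX R * 1) - cst2 a * (varY R * 1).

Lemma Q0_1 a c : (Q0 a c)`_1 = (- a)%:P.
Proof.
apply/polyP => i; rewrite -cfE /Q0 cfB !cfC cfX cfY coefC.
case: i => [|i]; cbv iota; rewrite !cf1; cbv iota.
  by rewrite eqxx mulr0 mulr1 sub0r.
by rewrite (_ : (i.+1 == 0)%N = false) //; case: i => [|i]; cbv iota; rewrite !mulr0 subr0.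
Qed.

Lemma size_Q0 a c : a != 0 -> size (Q0 a c) = 2%N.
Proof.
move=> ha; apply/eqP; rewrite eqn_leq; apply/andP; split.
  apply/leq_sizeP => j hj; apply/polyP => i; rewrite coef0 -cfE /Q0 cfB !cfC cfX cfY.
  case: j hj => [|[|j]] // _; case: i => [|[|i]]; cbv iota; rewrite ?cf1; cbv iota;
    by rewrite !mulr0 subr0.
rewrite ltnNge; apply/negP => /leq_sizeP /(_ 1%N (leqnn 1)).
by rewrite Q0_1 => /eqP; rewrite polyC_eq0 oppr_eq0 (negbTE ha).
Qed.

Lemma eval2Q0 a c x y : eval2 (Q0 a c) x y = c * x - a * y.
Proof.
rewrite /eval2 /Q0 /cst2 /varX /varY.
rewrite !hornerE.
by congr (_ - _); apply: mulr1.
Qed.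


Lemma eqC (x y : C) : x = y -> x = y. Proof. by []. Qed.
Ltac cfs := apply: eqC; do 4 (cbv iota; rewrite ?cfD ?cfB ?cfN ?cfC ?cfX ?cfY ?cf1).

Lemma lie_varX a b c d : lie a b c d (varX R) = (cst2 a * varY R + cst2 b) * varX R.
Proof.
rewrite -[varX R]mulr1.
have -> : (cst2 a * varY R + cst2 b) * (varX R * 1) =
  cst2 a * (varY R * (varX R * 1)) + cst2 b * (varX R * 1) by ring.
apply/polyP => j; apply/polyP => i; rewrite -!cfE cf_lie.
case: i => [|[|[|i]]]; case: j => [|[|[|j]]]; cfs; ring.
Qed.

Lemma lie_varY a b c d : lie a b c d (varY R) = (cst2 c * varX R + cst2 d) * varY R.
Proof.
rewrite -[varY R]mulr1.
have -> : (cst2 c * varX R + cst2 d) * (varY R * 1) =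
  cst2 c * (varX R * (varY R * 1)) + cst2 d * (varY R * 1) by ring.
apply/polyP => j; apply/polyP => i; rewrite -!cfE cf_lie.
case: i => [|[|[|i]]]; case: j => [|[|[|j]]]; cfs; ring.
Qed.

Lemma lie_Q0 a b c : lie a b c b (Q0 a c) = cst2 b * Q0 a c.
Proof.
rewrite /Q0.
have -> : cst2 b * (cst2 c * (varX R * 1) - cst2 a * (varY R * 1)) =
  cst2 b * (cst2 c * (varX R * 1)) - cst2 b * (cst2 a * (varY R * 1)) by ring.
apply/polyP => j; apply/polyP => i; rewrite -!cfE cf_lie.
case: i => [|[|[|i]]]; case: j => [|[|[|j]]]; cfs; ring.
Qed.

End Main.



Section Main2.
Context {R : realType}.
Local Notation C := (R[i]).
Local Notation Poly2 := ({poly {poly C}}).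
Implicit Types P Q A B U : Poly2.

Lemma evXk (k x y : C) : eval2 (varX R * cst2 k) x y = x * k.
Proof. by rewrite /eval2 /varX /cst2 !hornerE. Qed.
Lemma evYk (k x y : C) : eval2 (varY R * cst2 k) x y = y * k.
Proof. by rewrite /eval2 /varY /cst2 !hornerE. Qed.
Lemma evQk (a c k x y : C) : eval2 (Q0 a c * cst2 k) x y = (c * x - a * y) * k.
Proof. by rewrite (eval2M (Q0 a c) (cst2 k) x y) eval2Q0 (eval2C k x y). Qed.

Lemma cst2M (x y : C) : cst2 x * cst2 y = cst2 (x * y).
Proof. by rewrite /cst2 !polyCM. Qed.
Lemma cst2_1 : cst2 1 = 1 :> Poly2.
Proof. by rewrite /cst2 !polyC1. Qed.


Lemma unit_cases (P : Poly2) (F : Poly2) D : irreducible2 P -> P = F * D ->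
  ~~ (F \is a GRing.unit) -> exists2 k : C, k != 0 & P = F * cst2 k.
Proof.
move=> [_ [_ hirr]] hP hF; case: (hirr F D hP) => [hu|hu]; first by rewrite hu in hF.
by have [k hk hD] := unit2 _ hu; exists k; rewrite // hP hD.
Qed.

Lemma classify (a b c d : C) P : a != 0 -> b != 0 -> c != 0 -> d != 0 ->
  irreducible2 P -> Defs.invariant a b c d P ->
  [\/ exists2 k : C, k != 0 & P = varX R * cst2 k,
       exists2 k : C, k != 0 & P = varY R * cst2 k
     | b = d /\ exists2 k : C, k != 0 & P = Q0 a c * cst2 k].
Proof.
move=> ha hb hc hd hirr [hP [K hK]].
have [h0|hY] := eqVneq (P`_0) 0.
  apply: Or32; apply: (unit_cases _ _ _ hirr (facY _ h0)).
  by rewrite /varY poly_unitE size_polyX.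
have [hX|hX] := boolP [exists j : 'I_(size P), cf P 0 j != 0]; last first.
  have h0 : forall j, cf P 0 j = 0.
    move=> j; have [hj|hj] := ltnP j (size P); last exact: cf_big.
    by move/existsPn: hX => /(_ (Ordinal hj)); rewrite negbK => /eqP.
  apply: Or31; apply: (unit_cases _ _ _ hirr (facX _ h0)).
  by rewrite /varX poly_unitE size_polyC polyX_eq0 coefC eqxx poly_unitE size_polyX.
have hX' : exists j, cf P 0 j != 0 by case/existsP: hX => j hj; exists (val j).
have [hm0 hm] := core _ _ _ _ _ _ ha hb hc hd hP hK hY hX'.
have [hmz|hm'] := eqVneq ((size P).-1) 0%N.
  exfalso; case: hirr => _ [hnu _]; apply: hnu; rewrite (hm0 hmz) cst2_unit //.
  apply/negP => /eqP h; move: hP; rewrite (hm0 hmz) h /cst2 !polyC0 eqxx //.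
have hm2 : (size P).-1 <> 0%N by move=> e; rewrite e eqxx in hm'.
have [hbd hid] := hm hm2.
have hnz : a * ((size P).-1)%:R != 0 by rewrite mulf_neq0 // natr_neq0.
have hpq : P = Q0 a c * (cst2 (a * ((size P).-1)%:R)^-1 * - dY P).
  by rewrite /Q0 mulrCA -hid mulrCA cst2M mulVf // cst2_1 mulr1.
apply: Or33; split => //; apply: (unit_cases _ _ _ hirr hpq).
by rewrite poly_unitE size_Q0.
Qed.


Lemma irrX : irreducible2 (varX R).
Proof.
split; first by rewrite /varX polyC_eq0 polyX_eq0.
split; last exact: irr_varX.
by rewrite /varX poly_unitE size_polyC polyX_eq0 coefC eqxx poly_unitE size_polyX.
Qed.

Lemma irrY : irreducible2 (varY R).
Proof.
split; first by rewrite /varY polyX_eq0.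
split; first by rewrite /varY poly_unitE size_polyX.
by apply: irr_lin; rewrite /varY ?size_polyX // coefX unitr1.
Qed.

Lemma irrQ (a c : C) : a != 0 -> irreducible2 (Q0 a c).
Proof.
move=> ha; split; first by rewrite -size_poly_eq0 size_Q0.
split; first by rewrite poly_unitE size_Q0.
by apply: irr_lin; rewrite ?size_Q0 // Q0_1 unit_size1 // size_polyC oppr_eq0 ha.
Qed.

Lemma zsetk (k u : C) : k != 0 -> (u * k = 0 <-> u = 0).
Proof. by move=> hk; split => [/eqP|->]; [rewrite mulf_eq0 (negbTE hk) orbF => /eqP | rewrite mul0r]. Qed.

End Main2.

Theorem mainTheorem6 (R : realType) (a b c d : R[i])
  (ha : a != 0) (hb : b != 0) (hc : c != 0) (hd : d != 0) :
  (b != d ->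
    forall S : R[i] * R[i] -> Prop,
      irr_inv_curve a b c d S <->
        ((forall p, S p <-> p.1 = 0) \/ (forall p, S p <-> p.2 = 0))) /\
  (b = d ->
    forall S : R[i] * R[i] -> Prop,
      irr_inv_curve a b c d S <->
        [\/ (forall p, S p <-> p.1 = 0), (forall p, S p <-> p.2 = 0)
          | (forall p, S p <-> c * p.1 - a * p.2 = 0)]).
Proof.
have hXinv : Defs.invariant a b c d (varX R).
  split; first by rewrite /varX polyC_eq0 polyX_eq0.
  by exists (cst2 a * varY R + cst2 b); exact: lie_varX.
have hYinv : Defs.invariant a b c d (varY R).
  split; first by rewrite /varY polyX_eq0.
  by exists (cst2 c * varX R + cst2 d); exact: lie_varY.
split.
- move=> hbd S; split.
  + case=> P [hirr [hinv hS]].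
    case: (classify _ _ _ _ _ ha hb hc hd hirr hinv) => [[k hk hP]|[k hk hP]|[hbd' _]].
    * by left => p; rewrite hS hP evXk zsetk.
    * by right => p; rewrite hS hP evYk zsetk.
    * by rewrite hbd' eqxx in hbd.
  + case=> hS.
    * exists (varX R); split; first exact: irrX.
      by split => // p; rewrite hS eval2X.
    * exists (varY R); split; first exact: irrY.
      by split => // p; rewrite hS eval2Y.
- move=> hbd S; split.
  + case=> P [hirr [hinv hS]].
    case: (classify _ _ _ _ _ ha hb hc hd hirr hinv) => [[k hk hP]|[k hk hP]|[_ [k hk hP]]].
    * by apply: Or31 => p; rewrite hS hP evXk zsetk.
    * by apply: Or32 => p; rewrite hS hP evYk zsetk.
    * by apply: Or33 => p; rewrite hS hP evQk zsetk.
  + case=> hS.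
    * exists (varX R); split; first exact: irrX.
      by split => // p; rewrite hS eval2X.
    * exists (varY R); split; first exact: irrY.
      by split => // p; rewrite hS eval2Y.
    * exists (Q0 a c); split; first exact: irrQ.
      split; last by move=> p; rewrite hS eval2Q0.
      split; first by rewrite -size_poly_eq0 size_Q0.
      by exists (cst2 b); rewrite -hbd lie_Q0.
Qed.
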